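(* Let $n\ge2$, $F\in GL^+(n)$, $\mu>0$, $\mu_c\ge0$. If $X$ is a symmetric matrix with $X^2=FF^T$ and $\det X>0$, then $R=X^TF^{-T}\in SO(n)$ is a critical point of $\widetilde W_{\mu,\mu_c}(\cdot;F)$. In particular, the orthogonal factor $R_p$ of the polar decomposition $F=R_pU$ ($R_p\in SO(n)$, $U$ symmetric positive definite) is a critical point of $\widetilde W_{\mu,\mu_c}(\cdot;F)$.
   Context: $\mathrm{sym}(Y)=\tfrac12(Y+Y^T)$, $\mathrm{skew}(Y)=\tfrac12(Y-Y^T)$, $\|Y\|^2=\mathrm{tr}(Y^TY)$. For $F\in GL^+(n)$ (positive determinant), $\mu>0$, $\mu_c\ge0$: $\widetilde W_{\mu,\mu_c}(R;F)=\mu\|\mathrm{sym}(R^TF-\mathbb I_n)\|^2+\mu_c\|\mathrm{skew}(R^TF-\mathbb I_n)\|^2$ for $R\in SO(n)$; critical points are those of its restriction to the submanifold $SO(n)\subset\mathcal M_{n\times n}(\mathbb R)$. *)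

(* Defs.v *)
From HB Require Import structures.
From mathcomp Require Import all_boot all_order all_algebra.
Set Implicit Arguments. Unset Strict Implicit. Unset Printing Implicit Defensive.
Import Order.TTheory GRing.Theory Num.Theory.
Local Open Scope ring_scope.

(* sym(Y) = 1/2 (Y + Y^T), skew(Y) = 1/2 (Y - Y^T), ||Y||^2 = tr(Y^T Y);
   stated over any commutative unit ring (so that they also make sense over
   polynomials {poly K}, used to define directional derivatives). *)
Definition msym {K : comUnitRingType} {n : nat} (Y : 'M[K]_n) : 'M[K]_n :=
  (2%:R)^-1 *: (Y + Y^T).
Definition mskew {K : comUnitRingType} {n : nat} (Y : 'M[K]_n) : 'M[K]_n :=
  (2%:R)^-1 *: (Y - Y^T).
Definition mnormsq {K : comUnitRingType} {n : nat} (Y : 'M[K]_n) : K :=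
  \tr (Y^T *m Y).

Definition Wt {K : comUnitRingType} {n : nat} (mu muc : K) (F R : 'M[K]_n) : K :=
  mu * mnormsq (msym (R^T *m F - 1%:M)) + muc * mnormsq (mskew (R^T *m F - 1%:M)).

(* Directional (Gateaux) derivative of the polynomial map R |-> W~(R;F) on
   M_{n x n}(K) at R in direction H:  d/dt W~(R + t H; F) at t = 0,
   computed exactly via the polynomial t |-> W~(R + t H; F) in {poly K}. *)
Definition dWt {K : realFieldType} {n : nat} (mu muc : K) (F R H : 'M[K]_n) : K :=
  ((Wt mu%:P muc%:P (map_mx polyC F)
       (map_mx polyC R + 'X *: map_mx polyC H))^`()).[0].

Definition inSO {K : realFieldType} {n : nat} (R : 'M[K]_n) : Prop :=
  R^T *m R = 1%:M /\ \det R = 1.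

Definition inGLplus {K : realFieldType} {n : nat} (F : 'M[K]_n) : Prop :=
  0 < \det F.

(* Tangent space of SO(n) at R: { R A | A^T = -A }. *)
Definition critical_SO {K : realFieldType} {n : nat} (mu muc : K) (F R : 'M[K]_n)
  : Prop :=
  inSO R /\ forall A : 'M[K]_n, A^T = - A -> dWt mu muc F R (R *m A) = 0.

Definition posdef {K : realFieldType} {n : nat} (U : 'M[K]_n) : Prop :=
  U^T = U /\ forall v : 'cV[K]_n, v != 0 -> 0 < (v^T *m U *m v) 0 0.

(* Main.v *)
Require Import Defs.
From HB Require Import structures.
From mathcomp Require Import all_boot all_order all_algebra.
From mathcomp Require Import ring lra.
Import Order.TTheory GRing.Theory Num.Theory.
Local Open Scope ring_scope.

Section Aux.
Variable (K : realFieldType) (n : nat).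
Local Notation T := (map_mx (@polyC K)).

Lemma tr_map (A : 'M[K]_n) : \tr (T A) = (\tr A)%:P.
Proof. rewrite /mxtrace rmorph_sum; apply: eq_bigr => i _; by rewrite mxE. Qed.

Lemma inv2P : (2%:R : {poly K})^-1 = (2%:R^-1)%:P.
Proof. by rewrite -polyC_natr polyCV. Qed.

Lemma msymP (A B : 'M[K]_n) : msym (T A + 'X *: T B) = T (msym A) + 'X *: T (msym B).
Proof.
rewrite /msym inv2P; apply/matrixP=> i j; rewrite !mxE.
rewrite !(rmorphD, rmorphM, rmorphB) /=. ring.
Qed.

Lemma mskewP (A B : 'M[K]_n) : mskew (T A + 'X *: T B) = T (mskew A) + 'X *: T (mskew B).
Proof.
rewrite /mskew inv2P; apply/matrixP=> i j; rewrite !mxE.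
rewrite !(rmorphD, rmorphM, rmorphB) /=. ring.
Qed.

Lemma normP (A B : 'M[K]_n) : mnormsq (T A + 'X *: T B) =
  (mnormsq A)%:P + 'X * ((\tr (A^T *m B) + \tr (B^T *m A))%:P + 'X * (mnormsq B)%:P).
Proof.
rewrite /mnormsq.
have -> : (T A + 'X *: T B)^T = T A^T + 'X *: T B^T.
  by apply/matrixP=> i j; rewrite !mxE.
rewrite /mnormsq.
rewrite mulmxDl !mulmxDr -!scalemxAl -!scalemxAr !mxtraceD !mxtraceZ -!map_mxM !tr_map.
rewrite rmorphD /= !mulrDr !addrA. congr (_ + _ + _ + _).
Qed.

Lemma argP (F R H : 'M[K]_n) :
  (T R + 'X *: T H)^T *m T F - 1%:M = T (R^T *m F - 1%:M) + 'X *: T (H^T *m F).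
Proof.
have -> : (T R + 'X *: T H)^T = T R^T + 'X *: T H^T.
  by apply/matrixP=> i j; rewrite !mxE.
rewrite mulmxDl -scalemxAl -!map_mxM map_mxB map_mx1.
by rewrite addrAC.
Qed.

Lemma deriv0 (p : {poly K}) : p^`().[0] = p`_1.
Proof. by rewrite horner_coef0 coef_deriv. Qed.

Lemma dWtE mu muc (F R H : 'M[K]_n) :
  let P := R^T *m F - 1%:M in let Q := H^T *m F in
  dWt mu muc F R H =
   mu * (\tr ((msym P)^T *m msym Q) + \tr ((msym Q)^T *m msym P)) +
   muc * (\tr ((mskew P)^T *m mskew Q) + \tr ((mskew Q)^T *m mskew P)).
Proof.
move=> P Q; rewrite /dWt /Wt argP msymP mskewP !normP deriv0.
by rewrite !coefE /= !add0r !mul0r !addr0.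
Qed.
End Aux.

Lemma skew_tr0 {K : realFieldType} {n} {S A : 'M[K]_n} :
  S^T = S -> A^T = - A -> \tr (S *m A) = 0.
Proof.
move=> hS hA.
have h : \tr (S *m A) = - \tr (S *m A).
  rewrite -{1}mxtrace_tr trmx_mul hA hS mulNmx linearN /= mxtrace_mulC //.
lra.
Qed.

Lemma crit (K : realFieldType) n mu muc (F R : 'M[K]_n) :
  inSO R -> (R^T *m F)^T = R^T *m F -> critical_SO mu muc F R.
Proof.
move=> hR hU; split=> // A hA; rewrite dWtE.
set U := R^T *m F in hU *.
have hQ : (R *m A)^T *m F = A^T *m U by rewrite trmx_mul -mulmxA.
rewrite hQ.
set P := U - 1%:M.
have hP : P^T = P by rewrite /P linearB /= hU trmx1.
have hk : mskew P = 0.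
  by apply/matrixP=> i j; rewrite /mskew hP subrr scaler0.
have hs : msym P = P.
  rewrite /msym hP -mulr2n -scaler_nat scalerA mulVf ?scale1r //.
  by rewrite pnatr_eq0.
rewrite hk hs trmx0 mul0mx mulmx0 mxtrace0 addr0 mulr0 addr0.
have hUP : (U *m P)^T = U *m P.
  by rewrite trmx_mul hP hU /P mulmxBr mulmxBl mulmx1 mul1mx.
have h0 : \tr (P *m (A^T *m U)) = 0.
  rewrite mxtrace_mulC -mulmxA mxtrace_mulC hA mulmxN linearN /=.
  by rewrite (skew_tr0 hUP hA : _ = 0) oppr0.
have e1 : \tr ((msym (A^T *m U))^T *m P) = \tr (P *m msym (A^T *m U)).
  by rewrite -mxtrace_tr trmx_mul trmxK hP.
rewrite e1 hP /msym -scalemxAr mxtraceZ mulmxDr mxtraceD h0.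
rewrite -mxtrace_tr trmx_mul trmxK hP mxtrace_mulC h0.
by rewrite !addr0 !mulr0 addr0 mulr0.
Qed.

Theorem mainTheorem2 (K : realFieldType) (n : nat) (F : 'M[K]_n) (mu muc : K) :
  (2 <= n)%N -> inGLplus F -> 0 < mu -> 0 <= muc ->
  (forall X : 'M[K]_n, X^T = X -> X *m X = F *m F^T -> 0 < \det X ->
     inSO (X^T *m (invmx F)^T) /\ critical_SO mu muc F (X^T *m (invmx F)^T)) /\
  (forall Rp U : 'M[K]_n, inSO Rp -> posdef U -> F = Rp *m U ->
     critical_SO mu muc F Rp).
Proof.
move=> _ hF _ _; split; last first.
  move=> Rp U hR [hU _] ->; apply: crit => //.
  by rewrite mulmxA (proj1 hR) mul1mx.
move=> X hX hXX hdX.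
have uF : F \in unitmx by rewrite unitmxE unitfE; apply: lt0r_neq0.
have uFT : F^T \in unitmx by rewrite unitmxE det_tr unitfE; apply: lt0r_neq0.
set R := X^T *m (invmx F)^T.
have hRT : R^T = invmx F *m X by rewrite /R trmx_mul !trmxK.
have hO : R^T *m R = 1%:M.
  rewrite hRT /R hX -mulmxA (mulmxA X) hXX -!mulmxA -trmx_mul mulVmx // trmx1 mulmx1.
  by rewrite mulVmx.
have hSO : inSO R.
  split => //.
  have h1 : \det R * \det R = 1.
    by rewrite -{1}det_tr -det_mulmx hO det1.
  have h2 : 0 < \det R.
    rewrite /R det_mulmx !det_tr det_inv; apply: mulr_gt0 => //.
    by rewrite invr_gt0.
  nra.
split => //; apply: crit => //.
rewrite trmx_mul trmxK hRT.
have key : forall M N : 'M[K]_n, F *m M *m F^T = F *m N *m F^T -> M = N.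
  move=> M N e.
  move: (congr1 (fun Z => invmx F *m Z *m invmx F^T) e) => /=.
  by rewrite !mulmxA mulVmx // !mul1mx -!mulmxA !mulmxV // !mulmx1.
apply: key; rewrite /R hX.
rewrite !mulmxA -(mulmxA _ (invmx F)^T) -trmx_mul mulmxV // trmx1 mulmx1 -hXX.
by rewrite mul1mx -(mulmxA X F) -hXX mulmxA.
Qed.
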